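(* Suppose $\gamma=\lambda/L$ (so that $f_\gamma^\lambda=f_{1/L}$, where $f_{1/L}(z):=\min_yf(y)+\frac L2\|y-z\|^2$). Then for every $z\in\Omega_0$, $$\frac{f(z)-f_*}2\le f_{1/L}(z)-f_*\le f(z)-f_*.$$
   Context: $f:\mathbb{R}^d\to\mathbb{R}$ is closed, twice continuously differentiable with $\inf f=f_*>-\infty$ attained, $\tau$-weakly convex on $\mathbb{R}^d$ with $L\ge2\tau>0$, $\lambda>0$. For $\gamma>0$, $f_\gamma^\lambda(x):=\min_yf(y)+\frac\lambda{2\gamma}\|x-y\|^2$. $x_0\in\mathbb{R}^d$ is fixed, $\Delta:=f_\gamma^\lambda(x_0)-\min f_\gamma^\lambda$, $\Omega_0:=\{x:f_\gamma^\lambda(x)-\min f_\gamma^\lambda\le2\Delta\}$, $R_0=\sqrt{\Delta\gamma/(160\lambda)}$, $\Omega:=\mathrm{conv}(\{x:\exists w\in\Omega_0,\|x-w\|\le R_0\})$, and for all $x,y\in\Omega$: $\|\nabla f(x)-\nabla f(y)\|\le L\|x-y\|$ and $\|\nabla f(x)\|^2\le2L(f(x)-f_* )$. *)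

(* Defs.v *)
From HB Require Import structures.
From mathcomp Require Import all_boot all_order all_algebra.
From mathcomp Require Import all_classical all_reals all_analysis.
Set Implicit Arguments. Unset Strict Implicit. Unset Printing Implicit Defensive.
Import Order.TTheory GRing.Theory Num.Theory.
Import numFieldNormedType.Exports.
Local Open Scope classical_set_scope.
Local Open Scope ring_scope.

Section Defs.
Variables (R : realType) (d : nat).
Notation V := 'rV[R]_d.

Definition enorm (x : V) : R := Num.sqrt (\sum_(i < d) x ord0 i ^+ 2).

Definition basis_vec (i : 'I_d) : V := delta_mx ord0 i.
Definition grad (f : V -> R) (x : V) : V := \row_i ('D_(basis_vec i) f x).

Definition C2 (f : V -> R) : Prop :=
  (forall x, differentiable f x) /\
  (forall i x, differentiable (fun y => 'D_(basis_vec i) f y) x) /\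
  (forall i j, continuous (fun y => 'D_(basis_vec j) (fun z => 'D_(basis_vec i) f z) y)).

Definition closed_fun (f : V -> R) : Prop :=
  closed [set p : V * R | f p.1 <= p.2].

Definition convex_fun (g : V -> R) : Prop :=
  forall (x y : V) (t : R), 0 <= t <= 1 ->
    g (t *: x + (1 - t) *: y) <= t * g x + (1 - t) * g y.

Definition weakly_convex (tau : R) (f : V -> R) : Prop :=
  convex_fun (fun x => f x + tau / 2 * enorm x ^+ 2).

Definition convex_set_ (A : set V) : Prop :=
  forall (x y : V) (t : R), A x -> A y -> 0 <= t <= 1 -> A (t *: x + (1 - t) *: y).

Definition conv_hull (A : set V) : set V :=
  [set x | forall B : set V, convex_set_ B -> A `<=` B -> B x].

Definition menv (f : V -> R) (c : R) (z : V) : R :=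
  inf [set f y + c / 2 * enorm (z - y) ^+ 2 | y in [set: V]].

Definition moreau (f : V -> R) (gamma lambda : R) (x : V) : R :=
  menv f (lambda / gamma) x.

Definition min_moreau (f : V -> R) (gamma lambda : R) : R :=
  inf (range (moreau f gamma lambda)).

Definition Delta (f : V -> R) (gamma lambda : R) (x0 : V) : R :=
  moreau f gamma lambda x0 - min_moreau f gamma lambda.

Definition Omega0 (f : V -> R) (gamma lambda : R) (x0 : V) : set V :=
  [set x | moreau f gamma lambda x - min_moreau f gamma lambda
           <= 2 * Delta f gamma lambda x0].

Definition R0 (f : V -> R) (gamma lambda : R) (x0 : V) : R :=
  Num.sqrt (Delta f gamma lambda x0 * gamma / (160 * lambda)).

Definition Omega (f : V -> R) (gamma lambda : R) (x0 : V) : set V :=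
  conv_hull [set x | exists2 w, Omega0 f gamma lambda x0 w &
                     enorm (x - w) <= R0 f gamma lambda x0].

End Defs.

(* Main.v *)
Require Import Defs.
From HB Require Import structures.
From mathcomp Require Import all_boot all_order all_algebra.
From mathcomp Require Import all_classical all_reals all_analysis.
From mathcomp Require Import ring lra.
Import Order.TTheory GRing.Theory Num.Theory.
Import numFieldNormedType.Exports.
Local Open Scope classical_set_scope.
Local Open Scope ring_scope.

Section H.
Variables (R : realType) (d : nat).
Notation V := 'rV[R]_d.

Definition dot (a b : V) : R := \sum_(i < d) a ord0 i * b ord0 i.

Lemma enorm_sq (x : V) : enorm x ^+ 2 = \sum_(i < d) x ord0 i ^+ 2.
Proof. by rewrite /enorm sqr_sqrtr // sumr_ge0 // => i _; rewrite sqr_ge0. Qed.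

Lemma enorm_ge0 (x : V) : 0 <= enorm x.
Proof. exact: sqrtr_ge0. Qed.

Lemma enorm0 : enorm (0 : V) = 0.
Proof. by rewrite /enorm big1 ?sqrtr0 // => i _; rewrite mxE expr0n. Qed.

Lemma enormZ (t : R) (x : V) : 0 <= t -> enorm (t *: x) = t * enorm x.
Proof.
move=> t0; rewrite /enorm.
rewrite (eq_bigr (fun i => t ^+ 2 * x ord0 i ^+ 2)); last by move=> i _; rewrite mxE exprMn.
by rewrite -mulr_sumr sqrtrM ?sqr_ge0 // sqrtr_sqr ger0_norm.
Qed.

Lemma coord_le (x : V) i : `|x ord0 i| <= enorm x.
Proof.
rewrite -sqrtr_sqr /enorm ler_sqrt; last by rewrite sumr_ge0 // => j _; rewrite sqr_ge0.
rewrite (bigD1 i) //= lerDl sumr_ge0 // => j _; exact: sqr_ge0.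
Qed.

Lemma young (c : R) (a b : V) : 0 < c ->
  dot a b <= c / 2 * enorm a ^+ 2 + c^-1 / 2 * enorm b ^+ 2.
Proof.
move=> c0; rewrite !enorm_sq !mulr_sumr -big_split; apply: ler_sum => i _ /=.
set x := a ord0 i; set y := b ord0 i.
have -> : c / 2 * x ^+ 2 + c^-1 / 2 * y ^+ 2 = x * y + (c * x - y) ^+ 2 / (2 * c).
  by field; rewrite gt_eqF.
by rewrite lerDl divr_ge0 ?sqr_ge0 // mulr_ge0 // ltW.
Qed.

Lemma dgrad (f : V -> R) x v : differentiable f x -> 'D_v f x = dot (grad f x) v.
Proof.
move=> df; rewrite deriveE // {1}(row_sum_delta v) linear_sum /dot.
apply: eq_bigr => i _; rewrite linearZ /= mxE deriveE // mulrC.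
by [].
Qed.
Lemma dummy : True. Proof. done.
Qed.

Lemma phi_derive (f : V -> R) (y v : V) (t : R) : derivable f (y + t *: v) v ->
  is_derive t 1 (fun s => f (y + s *: v)) ('D_v f (y + t *: v)).
Proof.
have E : (fun h : R => h^-1 *: (((fun s => f (y + s *: v)) \o shift t) (h *: 1) - f (y + t *: v)))
   = (fun h => h^-1 *: ((f \o shift (y + t *: v)) (h *: v) - f (y + t *: v))).
  apply: funext => h /=; congr (_ *: (f _ - _)).
  by rewrite [h%:A]mulr1 scalerDl addrCA.
move=> dv; apply: DeriveDef; first by rewrite /derivable E.
by rewrite /derive E.
Qed.

Lemma dotBl (a b w : V) : dot (a - b) w = dot a w - dot b w.
Proof.
rewrite /dot -sumrB; apply: eq_bigr => i _; rewrite !mxE mulrBl //.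
Qed.

Lemma descent (f : V -> R) (S : set V) (L : R) (y v : V) :
  (forall x, differentiable f x) -> 0 < L ->
  (forall t, 0 <= t <= 1 -> S (y + t *: v)) ->
  (forall x x', S x -> S x' -> enorm (grad f x - grad f x') <= L * enorm (x - x')) ->
  f (y + v) <= f y + dot (grad f y) v + L / 2 * enorm v ^+ 2.
Proof.
move=> Hdf L0 HS HL.
set c0 := dot (grad f y) v; set K := L / 2 * enorm v ^+ 2.
pose phi := fun s : R => f (y + s *: v).
pose psi : R -> R := phi - c0 \*: (fun s : R => s) - K \*: ((fun s : R => s) * (fun s : R => s)).
have Hd : forall t : R, is_derive t 1 psi (dot (grad f (y + t *: v)) v - c0 - K * (2 * t)).
  move=> t; have := @phi_derive f y v t (diff_derivable (v:=v) (Hdf (y + t *: v))).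
  rewrite dgrad // => Hp.
  apply: (is_derive_eq (is_deriveB (is_deriveB Hp (is_deriveZ c0 (@is_derive_id R R t 1)))
     (is_deriveZ K (is_deriveM (@is_derive_id R R t 1) (@is_derive_id R R t 1))))).
  rewrite /GRing.scale /=; ring.
have Hc : {within `[0, 1], continuous psi}.
  by apply: derivable_within_continuous => x _; case: (Hd x).
have [c /[!in_itv] /andP [c0p c1] Hm] := MVT ltr01 (fun x _ => Hd x) Hc.
have c0q : 0 < c := c0p.
have c1q : c < 1 := c1.
have Hpsi : psi 1 - psi 0 <= 0.
  rewrite Hm subr0 mulr1.
  have -> : dot (grad f (y + c *: v)) v - c0 = dot (grad f (y + c *: v) - grad f y) v.
    by rewrite dotBl.
  set A := grad f (y + c *: v) - grad f y.
  have HA : enorm A <= L * c * enorm v.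
    have := HL _ _ (HS c _) (HS 0 _).
    rewrite scale0r addr0 addrAC subrr add0r (enormZ _ _ (ltW c0p)) mulrA => H; apply: H.
      by rewrite !ltW.
    by rewrite lexx ler01.
  have HA2 : enorm A ^+ 2 <= (L * c * enorm v) ^+ 2.
    by rewrite lerXn2r // ?nnegrE ?enorm_ge0 // (le_trans (enorm_ge0 _) HA).
  have Lc0 : 0 < L * c by rewrite mulr_gt0.
  have := young _ A v (_ : 0 < (L * c)^-1); rewrite ?invr_gt0 // invrK => Hy.
  have Hu : (L * c)^-1 * (L * c) = 1 by rewrite mulVf // gt_eqF.
  set u := (L * c)^-1 in Hy Hu.
  have u0 : 0 <= u by rewrite /u invr_ge0 ltW.
  rewrite /K; move: (Hy Lc0) => {}Hy.
  have H1 : u / 2 * enorm A ^+ 2 <= u / 2 * (L * c * enorm v) ^+ 2.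
    by apply: ler_wpM2l => //; rewrite divr_ge0.
  have H2 : u / 2 * (L * c * enorm v) ^+ 2 = (u * (L * c)) * (L * c / 2 * enorm v ^+ 2).
    by ring.
  rewrite H2 Hu mul1r in H1.
  lra.
have E1 : psi 1 = f (y + v) - c0 - K.
  by rewrite /psi /phi !fctE /= scale1r /GRing.scale /= !mulr1.
have E0 : psi 0 = f y.
  by rewrite /psi /phi !fctE /= scale0r addr0 /GRing.scale /= !mulr0 !subr0.
rewrite E1 E0 in Hpsi; lra.
Qed.
End H.

Theorem lemma15 (R : realType) (d : nat) (f : 'rV[R]_d -> R)
  (tau L lambda gamma fstar : R) (x0 : 'rV[R]_d) :
  closed_fun f ->
  C2 f ->
  (forall x, fstar <= f x) -> (exists x, f x = fstar) ->
  weakly_convex tau f ->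
  0 < 2 * tau -> 2 * tau <= L ->
  0 < lambda -> 0 < gamma ->
  (forall x y, Omega f gamma lambda x0 x -> Omega f gamma lambda x0 y ->
     enorm (grad f x - grad f y) <= L * enorm (x - y)) ->
  (forall x, Omega f gamma lambda x0 x ->
     enorm (grad f x) ^+ 2 <= 2 * L * (f x - fstar)) ->
  gamma = lambda / L ->
  forall z, Omega0 f gamma lambda x0 z ->
    (f z - fstar) / 2 <= menv f L z - fstar /\ menv f L z - fstar <= f z - fstar.
Proof.
move=> _ [Hdf _] Hlb _ _ Htau HL2 Hlam _ HLip Hgrad Hg z Hz.
have L0 : 0 < L by lra.
pose E (x : 'rV[R]_d) := [set f y + L / 2 * enorm (x - y) ^+ 2 | y in [set: 'rV[R]_d]].
have lbE : forall x, has_lbound (E x).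
  move=> x; exists fstar => _ [y _ <-].
  have := Hlb y; have : 0 <= L / 2 * enorm (x - y) ^+ 2.
    by rewrite mulr_ge0 ?sqr_ge0 // divr_ge0 // ltW.
  lra.
have neE : forall x, E x !=set0 by move=> x; exists (f x + L / 2 * enorm (x - x) ^+ 2); exists x.
have menv_le : forall x y, menv f L x <= f y + L / 2 * enorm (x - y) ^+ 2.
  by move=> x y; apply: (ge_inf (lbE x)); exists y.
have menv_ge : fstar <= menv f L z.
  apply: lb_le_inf; first exact: neE.
  move=> _ [y _ <-].
  have := Hlb y; have : 0 <= L / 2 * enorm (z - y) ^+ 2.
    by rewrite mulr_ge0 ?sqr_ge0 // divr_ge0 // ltW.
  lra.
have menv_self : forall x, menv f L x <= f x.
  by move=> x; have := menv_le x x; rewrite subrr enorm0 expr0n /= mulr0 addr0.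
have Hmor : forall x, moreau f gamma lambda x = menv f L x.
  move=> x; rewrite /moreau Hg; congr menv; field.
  by rewrite !gt_eqF.
have upper := menv_self z.
split; last by lra.
set m := menv f L z.
suff : f z - fstar <= 2 * (m - fstar) by lra.
apply/ler_addgt0Pr => e e0.
have /cvgr_dist_lt /(_ (e / 2)) : f x @[x --> z] --> f z.
  exact: differentiable_continuous.
move=> /(_ _) /nbhs_ballP [|del del0 Hdel]; first by lra.
pose eps := Num.min (e / 4) (L * del ^+ 2 / 4).
have eps0 : 0 < eps.
  rewrite lt_min; apply/andP; split; first by lra.
  by rewrite divr_gt0 // mulr_gt0 // exprn_gt0.
have epsa : eps <= e / 4 by rewrite ge_min lexx.
have epsb : eps <= L * del ^+ 2 / 4 by rewrite ge_min lexx orbT.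
have Hlt : m < m + eps by rewrite ltrDl.
have [_ [y _ <-] Hy] := inf_lt (neE z) Hlt.
have nn0 : 0 <= L / 2 * enorm (z - y) ^+ 2.
  by rewrite mulr_ge0 ?sqr_ge0 // divr_ge0 // ltW.
have [Hbig|Hsmall] := leP eps (L / 2 * enorm (z - y) ^+ 2).
  have fy : f y <= m by lra.
  have Om0 : Omega0 f gamma lambda x0 y.
    move: Hz; rewrite /Omega0 /= !Hmor; have := menv_self y; rewrite -/m; lra.
  have Hseg : forall t, 0 <= t <= 1 -> Omega f gamma lambda x0 (y + t *: (z - y)).
    move=> t /andP [t0 t1] B Bc Bsub.
    have -> : y + t *: (z - y) = t *: z + (1 - t) *: y.
      by apply/rowP => i; rewrite !mxE; ring.
    apply: Bc; [apply: Bsub | apply: Bsub | by rewrite t0 t1].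
      by exists z => //; rewrite subrr enorm0 sqrtr_ge0.
    by exists y => //; rewrite subrr enorm0 sqrtr_ge0.
  have := @descent R d f _ L y (z - y) Hdf L0 Hseg HLip.
  rewrite [y + _]addrC subrK => Hdes.
  have := Hgrad _ (Hseg 0 _); rewrite scale0r addr0 => /(_ _) Gy.
  have {}Gy : enorm (grad f y) ^+ 2 <= 2 * L * (f y - fstar) by apply: Gy; rewrite lexx ler01.
  have := @young R d L^-1 (grad f y) (z - y) (_ : 0 < L^-1); rewrite invr_gt0 invrK => /(_ L0) Yg.
  have Gy2 : L^-1 / 2 * enorm (grad f y) ^+ 2 <= f y - fstar.
    have := ler_wpM2l (_ : 0 <= L^-1 / 2) Gy.
    rewrite (_ : L^-1 / 2 * (2 * L * (f y - fstar)) = f y - fstar); last by field; rewrite gt_eqF.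
    by apply; rewrite divr_ge0 // invr_ge0 ltW.
  lra.
have n2 : enorm (z - y) ^+ 2 < del ^+ 2 by nra.
have nd : enorm (z - y) < del.
  by rewrite -(ltr_pXn2r (n:=2)) // nnegrE ?enorm_ge0 // ltW.
have : `|f z - f y| < e / 2.
  apply: Hdel; split => // i j; rewrite (ord1 i).
  have := @coord_le R d (z - y) j; rewrite !mxE => H.
  rewrite /ball /=; exact: le_lt_trans H nd.
have := ler_norm (f z - f y).
have : fstar <= m by exact: menv_ge.
lra.
Qed.
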